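(* Let $g\colon(0,1)\to\mathbb{R}$ be a continuous, strictly increasing function such that $g(1-a)=-g(a)$ for all $a\in(0,1)$ and $\lim_{a\to0^+}g(a)=-\infty$. Extend $g$ by $g(0)=-\infty$, $g(1)=\infty$, and extend $g^{-1}\colon\mathbb{R}\to(0,1)$ by $g^{-1}(-\infty)=0$, $g^{-1}(\infty)=1$. Then the function \[ J(a,b)=g^{-1}\bigl(g(a)-g(b)\bigr),\qquad (a,b)\in[0,1]^2\setminus\{(0,0),(1,1)\}, \] is an involutive Jamesian function.
   Context: Let $D=[0,1]^2\setminus\{(0,0),(1,1)\}$. A function $J\colon D\to\mathbb{R}$ is called Jamesian if it satisfies, for all $(a,b)\in D$: (a) $J(a,\tfrac12)=a$; (b) $J(a,0)=1$ for $0<a\le 1$; (c) $J(b,a)=1-J(a,b)$; (d) $J(1-b,1-a)=J(a,b)$; (e) $J(a,b)$ is a non-decreasing function of $a$ for each $0\le b\le 1$ and a strictly increasing function of $a$ for each $0<b<1$. A Jamesian function is called involutive if in addition $J(a,J(a,b))=b$ whenever $0<a<1$ and $0\le b\le 1$. In the formula for $J$, the conventions $-\infty-\infty=-\infty$, $\infty-(-\infty)=\infty$, $t\pm\infty=\pm\infty$ and $\pm\infty - t=\pm\infty$ for real $t$ are used. *)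

(* Defs.v *)
From Stdlib Require Import Reals Lra ClassicalEpsilon.
From Coquelicot Require Import Coquelicot.
Open Scope R_scope.

Definition inD (a b : R) : Prop :=
  0 <= a <= 1 /\ 0 <= b <= 1 /\ ~ (a = 0 /\ b = 0) /\ ~ (a = 1 /\ b = 1).

(* Jamesian functions (J given as a total function on R^2; only its
   values on D matter). *)
Definition Jamesian (J : R -> R -> R) : Prop :=
  (forall a, inD a (1/2) -> J a (1/2) = a) /\
  (forall a, 0 < a <= 1 -> J a 0 = 1) /\
  (forall a b, inD a b -> J b a = 1 - J a b) /\
  (forall a b, inD a b -> J (1 - b) (1 - a) = J a b) /\
  (forall b a1 a2, 0 <= b <= 1 -> inD a1 b -> inD a2 b -> a1 <= a2 ->
     J a1 b <= J a2 b) /\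
  (forall b a1 a2, 0 < b < 1 -> inD a1 b -> inD a2 b -> a1 < a2 ->
     J a1 b < J a2 b).

Definition involutive_Jamesian (J : R -> R -> R) : Prop :=
  Jamesian J /\
  (forall a b, 0 < a < 1 -> 0 <= b <= 1 -> J a (J a b) = b).

Definition gext (g : R -> R) (a : R) : Rbar :=
  if Rle_dec a 0 then m_infty
  else if Rle_dec 1 a then p_infty
  else Finite (g a).

(* The inverse g^{-1} : R -> (0,1), chosen by Hilbert's epsilon: the
   (unique, under the hypotheses) a in (0,1) with g a = y. *)
Definition ginv (g : R -> R) (y : R) : R :=
  epsilon (inhabits 0) (fun a => 0 < a < 1 /\ g a = y).

Definition ginvext (g : R -> R) (y : Rbar) : R :=
  match y with
  | Finite t => ginv g t
  | p_infty => 1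
  | m_infty => 0
  end.

(* Subtraction on extended reals with the conventions of the paper:
   -oo - oo = -oo, oo - (-oo) = oo, t -/+ oo = -/+ oo, +/-oo - t = +/-oo.
   (The undefined cases oo - oo and -oo - (-oo) only arise at (1,1),(0,0),
   which are excluded from D; here they are arbitrarily set.) *)
Definition esub (x y : Rbar) : Rbar :=
  match x, y with
  | Finite s, Finite t => Finite (s - t)
  | p_infty, _ => p_infty
  | m_infty, _ => m_infty
  | Finite _, p_infty => m_infty
  | Finite _, m_infty => p_infty
  end.

Definition Jg (g : R -> R) (a b : R) : R :=
  ginvext g (esub (gext g a) (gext g b)).

(* Main.v *)
Require Import Defs.
From Stdlib Require Import Reals Lra ClassicalEpsilon.
From Coquelicot Require Import Coquelicot.
Open Scope R_scope.

Definition Incr (g : R -> R) := forall x y, 0 < x < 1 -> 0 < y < 1 -> x < y -> g x < g y.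
Definition Sym (g : R -> R) := forall a, 0 < a < 1 -> g (1 - a) = - g a.
Definition Surj (g : R -> R) := forall y, exists a, 0 < a < 1 /\ g a = y.

Lemma get_small (g : R -> R) M :
  filterlim g (at_right 0) (Rbar_locally m_infty) ->
  exists x, 0 < x < 1/2 /\ g x < M.
Proof.
  intros Hl.
  assert (H := Hl (fun t => t < M)).
  destruct H as [eps He].
  { exists M; intros; auto. }
  exists (Rmin (eps/2) (1/4)).
  assert (0 < eps) by (destruct eps; simpl; lra).
  assert (0 < Rmin (eps/2) (1/4)) by (apply Rmin_pos; lra).
  assert (Rmin (eps/2) (1/4) <= eps/2) by apply Rmin_l.
  assert (Rmin (eps/2) (1/4) <= 1/4) by apply Rmin_r.
  split; [lra|].
  apply He; [|lra].
  unfold ball; simpl; unfold AbsRing_ball, abs, minus, plus, opp; simpl.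
  rewrite Ropp_0, Rplus_0_r, Rabs_right; lra.
Qed.

Lemma surj_lemma (g : R -> R) :
  (forall a, 0 < a < 1 -> continuity_pt g a) -> Sym g ->
  filterlim g (at_right 0) (Rbar_locally m_infty) -> Surj g.
Proof.
  intros Hc Hs Hl y.
  destruct (get_small g (- Rabs y - 1) Hl) as [x [Hx Hgx]].
  assert (Hy1 : - Rabs y <= y) by (pose proof (Rle_abs (-y)); rewrite Rabs_Ropp in H; lra).
  assert (Hy2 : y <= Rabs y) by apply Rle_abs.
  assert (H1 := Hs x ltac:(lra)).
  destruct (Ranalysis5.IVT_interv (fun t => g t - y) x (1 - x)) as [z [Hz1 Hz2]].
  - intros a Ha. apply continuity_pt_minus; [apply Hc; lra| apply continuity_pt_const; intros u v; auto].
  - lra.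
  - simpl; lra.
  - simpl; lra.
  - exists z; split; [lra|]. simpl in Hz2; lra.
Qed.

Lemma ginv_spec g y : Surj g -> 0 < ginv g y < 1 /\ g (ginv g y) = y.
Proof.
  intros Hs. unfold ginv. apply epsilon_spec. apply Hs.
Qed.

Lemma g_inj g : Incr g -> forall x y, 0 < x < 1 -> 0 < y < 1 -> g x = g y -> x = y.
Proof.
  intros Hi x y Hx Hy E.
  destruct (Rtotal_order x y) as [h|[h|h]]; auto.
  - pose proof (Hi x y Hx Hy h); lra.
  - pose proof (Hi y x Hy Hx h); lra.
Qed.

Lemma ginv_g g a : Incr g -> Surj g -> 0 < a < 1 -> ginv g (g a) = a.
Proof.
  intros Hi Hs Ha. destruct (ginv_spec g (g a) Hs) as [H1 H2].
  apply (g_inj g Hi); auto.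
Qed.

Lemma ginv_lt g y1 y2 : Incr g -> Surj g -> y1 < y2 -> ginv g y1 < ginv g y2.
Proof.
  intros Hi Hs h. destruct (ginv_spec g y1 Hs) as [A1 B1].
  destruct (ginv_spec g y2 Hs) as [A2 B2].
  destruct (Rlt_le_dec (ginv g y1) (ginv g y2)) as [h'|h']; auto.
  destruct (Rle_lt_or_eq_dec _ _ h') as [h''|h''].
  - pose proof (Hi _ _ A2 A1 h''); lra.
  - rewrite h'' in B2. lra.
Qed.

Lemma ginv_le g y1 y2 : Incr g -> Surj g -> y1 <= y2 -> ginv g y1 <= ginv g y2.
Proof.
  intros Hi Hs h. destruct (Rle_lt_or_eq_dec _ _ h) as [h'|h'].
  - left; apply ginv_lt; auto.
  - subst; lra.
Qed.

Lemma ginv_opp g y : Incr g -> Sym g -> Surj g -> ginv g (- y) = 1 - ginv g y.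
Proof.
  intros Hi Hy Hs. destruct (ginv_spec g y Hs) as [A B].
  rewrite <- B at 1. rewrite <- (Hy _ A). apply ginv_g; auto; lra.
Qed.

Lemma g_half g : Sym g -> g (1/2) = 0.
Proof.
  intros Hy. pose proof (Hy (1/2) ltac:(lra)).
  replace (1 - 1/2) with (1/2) in H by field. lra.
Qed.

Lemma gext0 g a : a <= 0 -> gext g a = m_infty.
Proof. intros h; unfold gext; destruct (Rle_dec a 0); [auto|lra]. Qed.
Lemma gext1 g a : 0 < a -> 1 <= a -> gext g a = p_infty.
Proof. intros h h'; unfold gext; destruct (Rle_dec a 0); [lra|]; destruct (Rle_dec 1 a); [auto|lra]. Qed.
Lemma gextI g a : 0 < a < 1 -> gext g a = Finite (g a).
Proof. intros h; unfold gext; destruct (Rle_dec a 0); [lra|]; destruct (Rle_dec 1 a); [lra|auto]. Qed.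

Lemma case3 a : 0 <= a <= 1 -> a = 0 \/ 0 < a < 1 \/ a = 1.
Proof. intros; lra. Qed.

Ltac gsimp := repeat match goal with
 | |- context [gext ?g ?x] => first [ rewrite (gext0 g x) by lra | rewrite (gext1 g x) by lra | rewrite (gextI g x) by lra ] end.

Theorem theorem5p3 (g : R -> R)
  (g_cont : forall a, 0 < a < 1 -> continuity_pt g a)
  (g_incr : forall x y, 0 < x < 1 -> 0 < y < 1 -> x < y -> g x < g y)
  (g_sym : forall a, 0 < a < 1 -> g (1 - a) = - g a)
  (g_lim0 : filterlim g (at_right 0) (Rbar_locally m_infty)) :
  involutive_Jamesian (Jg g).
Proof.
  assert (Hi : Incr g) by exact g_incr.
  assert (Hy : Sym g) by exact g_sym.
  assert (Hs : Surj g) by (apply surj_lemma; auto).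
  assert (Hh := g_half g Hy).
  assert (Gs : forall y, 0 < ginv g y < 1) by (intro y; apply (ginv_spec g y Hs)).
  unfold involutive_Jamesian, Jamesian, Jg, inD.
  split; [repeat split|].
  - intros a [Ha _]. destruct (case3 a Ha) as [ ->|[H| ->]]; gsimp; simpl; auto.
    rewrite Hh, Rminus_0_r. apply ginv_g; auto.
  - intros a Ha. destruct (Rle_lt_or_eq_dec a 1 ltac:(lra)) as [H| ->]; gsimp; simpl; auto.
  - intros a b [Ha [Hb [H1 H2]]].
    destruct (case3 a Ha) as [ ->|[A| ->]]; destruct (case3 b Hb) as [ ->|[B| ->]];
      gsimp; simpl; try lra.
    rewrite <- ginv_opp; auto. f_equal; ring.
  - intros a b [Ha [Hb [H1 H2]]].
    destruct (case3 a Ha) as [ ->|[A| ->]]; destruct (case3 b Hb) as [ ->|[B| ->]];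
      rewrite ?Rminus_0_r, ?Rminus_diag; gsimp; simpl; try lra.
    rewrite (g_sym a A), (g_sym b B). f_equal; ring.
  - intros b a1 a2 Hb [Ha1 [_ [H1 H2]]] [Ha2 [_ [H3 H4]]] Hle.
    destruct (case3 b Hb) as [ ->|[B| ->]]; destruct (case3 a1 Ha1) as [ ->|[A1| ->]];
      destruct (case3 a2 Ha2) as [ ->|[A2| ->]]; gsimp; simpl; try lra;
      try (specialize (Gs (g a1 - g b)); lra); try (specialize (Gs (g a2 - g b)); lra).
    apply ginv_le; auto.
    destruct (Rle_lt_or_eq_dec _ _ Hle) as [h| ->]; [pose proof (g_incr _ _ A1 A2 h)|]; lra.
  - intros b a1 a2 Hb [Ha1 [_ [H1 H2]]] [Ha2 [_ [H3 H4]]] Hle.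
    destruct (case3 a1 Ha1) as [ ->|[A1| ->]];
      destruct (case3 a2 Ha2) as [ ->|[A2| ->]]; gsimp; simpl; try lra;
      try (specialize (Gs (g a1 - g b)); lra); try (specialize (Gs (g a2 - g b)); lra).
    apply ginv_lt; auto. pose proof (g_incr _ _ A1 A2 Hle); lra.
  - intros a b A Hb.
    destruct (case3 b Hb) as [ ->|[B| ->]]; gsimp; simpl; gsimp; simpl; auto.
    destruct (ginv_spec g (g a - g b) Hs) as [C D].
    rewrite (gextI g _ C). simpl. rewrite D.
    replace (g a - (g a - g b)) with (g b) by ring. apply ginv_g; auto.
Qed.
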